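(* Let $M$ be a generic structure for the class $\mathcal{C}$ (as described in the context), and let $\bar a,\bar b$ be tuples of $M$ enumerating strong substructures of the same type over $\emptyset$. If $tp(\bar a/N)=tp(\bar b/N)$ for some elementary substructure $N\preceq M$, then for every pair of subtuples $\bar a'\subseteq\bar a$, $\bar b'\subseteq\bar b$ of length $l$ occupying the same places in $\bar a$ and $\bar b$, $$(\bar a'\le_l\bar b'<_l f(\bar a'))\vee(\bar b'\le_l\bar a'<_l f(\bar b')).$$
   Context: Let $L=\{E_n,K_n,R_n : 2<n<\omega\}$ be a relational language, where $E_n$ and $R_n$ have arity $2n$ and $K_n$ has arity $3n$. All these relations hold only on tuples whose $n$-blocks consist of $n$ distinct elements, and their truth depends only on the underlying $n$-element sets of the blocks. Let $K$ be the class of finite $L$-structures $C$ such that for each $n$: (1) $E_n$ is an equivalence relation on the set ${C\choose n}$ of $n$-element subsets of $C$; (2) $R_n$ is irreflexive, respects $E_n$, and induces a partial injective function on ${C\choose n}/E_n$; (3) $K_n$ respects $E_n$ in each argument and induces a circular order on ${C\choose n}/E_n$; (4) $R_n(\bar x,\bar y)\wedge R_n(\bar y,\bar z)\to K_n(\bar x,\bar y,\bar z)$, and if $R_n(\bar v_i,\bar w_i)$ for $i=1,2,3$ then $K_n(\bar v_1,\bar v_2,\bar v_3)\leftrightarrow K_n(\bar w_1,\bar w_2,\bar w_3)$; (5) the partial function induced by $R_n$ extends to an injective function $f$ on some larger domain such that $f^n$ is the identity on its domain but $f^m(V)\ne V$ for every $V\in{C\choose n}/E_n$ and $0<m<n$.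 A structure $A\in K$ is strong if for every $n$, either all elements of ${A\choose n}$ are pairwise $E_n$-equivalent, or every $\bar a\in{A\choose n}$ lies in an $R_n$-cycle: a sequence $\bar a_1=\bar a,\dots,\bar a_n$ of pairwise non-$E_n$-equivalent elements of ${A\choose n}$ with $R_n(\bar a_i,\bar a_{i+1})$ for $i<n$ and $R_n(\bar a_n,\bar a_1)$. Let $\mathcal{C}$ be the class of strong structures in $K$. A countable $L$-structure $M$ is generic for $\mathcal{C}$ if: $\mathcal{C}$ is exactly the class of finite substructures of $M$ that belong to $\mathcal{C}$ (strong substructures); $M$ is the union of a chain of strong finite substructures; and whenever $A\subseteq M$ is a strong finite substructure and $A\subseteq B\in\mathcal{C}$, $B$ embeds into $M$ over $A$. Such $M$ exists, is $\aleph_0$-categorical, and every isomorphism between strong finite substructures of $M$ extends to an automorphism. Notation: $\bar a<_n\bar b<_n\bar c$ means $K_n(\bar a,\bar b,\bar c)$; $\le_n$ is its version allowing equality of $E_n$-classes; $f(\bar c)$ denotes some (any) $\bar c'$ with $R_n(\bar c,\bar c')$, where $n$ is the length of $\bar c$. *)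

(* Defs.v *)
From mathcomp Require Import all_boot.

Set Implicit Arguments.
Unset Strict Implicit.
Unset Printing Implicit Defensive.

(* E_n, R_n (arity 2n) are given as relations on pairs of
   n-blocks, K_n (arity 3n) on triples of n-blocks; an n-block is a map
   'I_n -> carrier.  The language only has symbols for 2 < n; the fields
   at n <= 2 are junk and are never used (all conditions quantify over
   2 < n, and formulas only use indices n.+3). *)
Record Lstr := {
  car :> Type;
  Erel : forall n, ('I_n -> car) -> ('I_n -> car) -> Prop;
  Rrel : forall n, ('I_n -> car) -> ('I_n -> car) -> Prop;
  Krel : forall n, ('I_n -> car) -> ('I_n -> car) -> ('I_n -> car) -> Prop
}.

Arguments Erel {_} n _ _.
Arguments Rrel {_} n _ _.
Arguments Krel {_} n _ _ _.

Definition sameset (T : Type) n (x y : 'I_n -> T) : Prop :=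
  forall z, (exists i, x i = z) <-> (exists i, y i = z).

(* Language convention: relations hold only on blocks of distinct elements,
   and their truth depends only on the underlying sets of the blocks. *)
Definition lang_ok (A : Lstr) : Prop :=
  forall n, 2 < n ->
  [/\ (forall x y : 'I_n -> A, Erel n x y -> injective x /\ injective y),
      (forall x y : 'I_n -> A, Rrel n x y -> injective x /\ injective y),
      (forall x y z : 'I_n -> A, Krel n x y z -> [/\ injective x, injective y & injective z]),
      (forall x x' y y' : 'I_n -> A, injective x -> injective x' -> injective y -> injective y' ->
          sameset x x' -> sameset y y' ->
          (Erel n x y <-> Erel n x' y') /\ (Rrel n x y <-> Rrel n x' y'))
    & (forall x x' y y' z z' : 'I_n -> A, injective x -> injective x' -> injective y ->
          injective y' -> injective z -> injective z' ->
          sameset x x' -> sameset y y' -> sameset z z' ->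
          (Krel n x y z <-> Krel n x' y' z'))].

Definition K_cond (A : Lstr) (n : nat) : Prop :=
  (forall x : 'I_n -> A, injective x -> Erel n x x) /\
      (forall x y : 'I_n -> A, Erel n x y -> Erel n y x) /\
      (forall x y z : 'I_n -> A, Erel n x y -> Erel n y z -> Erel n x z) /\
      (forall x : 'I_n -> A, ~ Rrel n x x) /\
      (forall x x' y y' : 'I_n -> A, Erel n x x' -> Erel n y y' -> Rrel n x y -> Rrel n x' y') /\
      (forall x y y' : 'I_n -> A, Rrel n x y -> Rrel n x y' -> Erel n y y') /\
      (forall x x' y : 'I_n -> A, Rrel n x y -> Rrel n x' y -> Erel n x x') /\
      (forall x x' y z : 'I_n -> A, Erel n x x' -> Krel n x y z -> Krel n x' y z) /\
      (forall x y y' z : 'I_n -> A, Erel n y y' -> Krel n x y z -> Krel n x y' z) /\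
      (forall x y z z' : 'I_n -> A, Erel n z z' -> Krel n x y z -> Krel n x y z') /\
   (forall x y z : 'I_n -> A, Krel n x y z -> Krel n y z x) /\
       (forall x y z : 'I_n -> A, Krel n x y z -> ~ Krel n z y x) /\
       (forall x y z w : 'I_n -> A, Krel n x y z -> Krel n x z w -> Krel n x y w) /\
       (forall x y z : 'I_n -> A, injective x -> injective y -> injective z ->
          ~ Erel n x y -> ~ Erel n y z -> ~ Erel n x z ->
          (Krel n x y z \/ Krel n z y x)) /\
       (forall x y z : 'I_n -> A, Rrel n x y -> Rrel n y z -> Krel n x y z) /\
       (forall v1 v2 v3 w1 w2 w3 : 'I_n -> A,
          Rrel n v1 w1 -> Rrel n v2 w2 -> Rrel n v3 w3 ->
          (Krel n v1 v2 v3 <-> Krel n w1 w2 w3)) /\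
  (* (5) R_n's induced partial function on classes extends to an injective f
         on a larger domain D (classes embedded into D via iota), f^n = id on D,
         and f^m(V) <> V for every class V of A and 0 < m < n. *)
       exists (D : Type) (iota : ('I_n -> A) -> D) (f : D -> D),
         [/\ (forall x y : 'I_n -> A, injective x -> injective y -> (iota x = iota y <-> Erel n x y)),
             injective f,
             (forall d, iter n f d = d),
             (forall x y : 'I_n -> A, Rrel n x y -> f (iota x) = iota y) &
             (forall x : 'I_n -> A, injective x -> forall m, 0 < m < n -> iter m f (iota x) <> iota x)].

Definition finite_str (A : Lstr) : Prop :=
  exists m (g : 'I_m -> A), forall x, exists i, g i = x.

Definition in_K (A : Lstr) : Prop :=
  finite_str A /\ lang_ok A /\ forall n, 2 < n -> K_cond A n.

Definition in_Rcycle (A : Lstr) n (x : 'I_n -> A) : Prop :=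
  exists c : nat -> ('I_n -> A),
    [/\ c 0 = x,
        (forall i j, i < n -> j < n -> i <> j -> ~ Erel n (c i) (c j)),
        (forall i, i.+1 < n -> Rrel n (c i) (c i.+1)) &
        Rrel n (c n.-1) (c 0)].

Definition strong (A : Lstr) : Prop :=
  in_K A /\
  forall n, 2 < n ->
    (forall x y : 'I_n -> A, injective x -> injective y -> Erel n x y) \/
    (forall x : 'I_n -> A, injective x -> in_Rcycle x).

Definition in_C (A : Lstr) : Prop := strong A.

Definition sub (M : Lstr) (P : M -> Prop) : Lstr := {|
  car := {x : M | P x};
  Erel n x y := Erel n (fun i => proj1_sig (x i)) (fun i => proj1_sig (y i));
  Rrel n x y := Rrel n (fun i => proj1_sig (x i)) (fun i => proj1_sig (y i));
  Krel n x y z := Krel n (fun i => proj1_sig (x i)) (fun i => proj1_sig (y i))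
                         (fun i => proj1_sig (z i)) |}.

Definition embedding (A B : Lstr) (h : A -> B) : Prop :=
  injective h /\
  forall n, 2 < n ->
    [/\ forall x y : 'I_n -> A, Erel n x y <-> Erel n (h \o x) (h \o y),
        forall x y : 'I_n -> A, Rrel n x y <-> Rrel n (h \o x) (h \o y) &
        forall x y z : 'I_n -> A, Krel n x y z <-> Krel n (h \o x) (h \o y) (h \o z)].

Definition generic (M : Lstr) : Prop :=
  (forall B : Lstr, in_C B -> exists h : B -> M, embedding h) /\
  (exists Ach : nat -> M -> Prop,
     [/\ forall k, in_C (@sub M (Ach k)),
         forall k x, Ach k x -> Ach k.+1 x &
         forall x, exists k, Ach k x]) /\
  (forall (P : M -> Prop), in_C (sub P) ->
     forall (B : Lstr) (g : sub P -> B), in_C B -> embedding g ->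
       exists h : B -> M, embedding h /\ forall x, h (g x) = proj1_sig x).

Inductive form : Type :=
| FEq : nat -> nat -> form
| FE : forall n, ('I_n.+3 -> nat) -> ('I_n.+3 -> nat) -> form
| FR : forall n, ('I_n.+3 -> nat) -> ('I_n.+3 -> nat) -> form
| FK : forall n, ('I_n.+3 -> nat) -> ('I_n.+3 -> nat) -> ('I_n.+3 -> nat) -> form
| FNot : form -> form
| FAnd : form -> form -> form
| FEx : nat -> form -> form.

Definition upd (T : Type) (rho : nat -> T) (v : nat) (x : T) : nat -> T :=
  fun i => if i == v then x else rho i.

Fixpoint sat (M : Lstr) (D : M -> Prop) (rho : nat -> M) (phi : form) : Prop :=
  match phi with
  | FEq i j => rho i = rho j
  | FE n x y => Erel n.+3 (rho \o x) (rho \o y)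
  | FR n x y => Rrel n.+3 (rho \o x) (rho \o y)
  | FK n x y z => Krel n.+3 (rho \o x) (rho \o y) (rho \o z)
  | FNot p => ~ sat D rho p
  | FAnd p q => sat D rho p /\ sat D rho q
  | FEx v p => exists x, D x /\ sat D (upd rho v x) p
  end.

Fixpoint free_in (v : nat) (phi : form) : Prop :=
  match phi with
  | FEq i j => v = i \/ v = j
  | FE n x y => exists i, v = x i \/ v = y i
  | FR n x y => exists i, v = x i \/ v = y i
  | FK n x y z => exists i, [\/ v = x i, v = y i | v = z i]
  | FNot p => free_in v p
  | FAnd p q => free_in v p \/ free_in v q
  | FEx w p => v <> w /\ free_in v p
  end.

(* the environment interpreting variables 0..k-1 by the tuple a, and
   variables k+j by rho j *)
Definition ext (T : Type) k (a : 'I_k -> T) (rho : nat -> T) : nat -> T :=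
  fun i => oapp a (rho (i - k)) (insub i : option 'I_k).

Definition msat (M : Lstr) (rho : nat -> M) (phi : form) : Prop :=
  sat (fun _ => True) rho phi.

Definition elem_sub (M : Lstr) (N : M -> Prop) : Prop :=
  (exists x, N x) /\
  forall (phi : form) (rho : nat -> M), (forall i, N (rho i)) ->
    (sat N rho phi <-> msat rho phi).

Definition same_type0 (M : Lstr) k (a b : 'I_k -> M) : Prop :=
  forall phi : form, (forall v, free_in v phi -> v < k) ->
    forall rho : nat -> M, msat (ext a rho) phi <-> msat (ext b rho) phi.

(* tp(a/N) = tp(b/N) : variables >= k are parameters taken from N *)
Definition same_type_over (M : Lstr) (N : M -> Prop) k (a b : 'I_k -> M) : Prop :=
  forall (phi : form) (rho : nat -> M), (forall i, N (rho i)) ->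
    (msat (ext a rho) phi <-> msat (ext b rho) phi).

(* x <=_n y <_n z : either K_n(x,y,z), or x E_n y and y, z lie in different classes *)
Definition le_lt (M : Lstr) n (x y z : 'I_n -> M) : Prop :=
  Krel n x y z \/ (Erel n x y /\ ~ Erel n y z).

Definition range_of (M : Lstr) k (a : 'I_k -> M) : M -> Prop :=
  fun x => exists i, a i = x.

(* Main.v *)
Require Import Defs.
From mathcomp Require Import all_boot.
From Stdlib Require Import Classical FunctionalExtensionality.
Set Implicit Arguments.
Unset Strict Implicit.
Unset Printing Implicit Defensive.

Ltac kc H := case: H => [Erf [Esy [Etr [Rir [Rre [Rfn [Rin [K1 [K2 [K3 [Kcy [Kas [Ktr [Kto [K4a [K4b _]]]]]]]]]]]]]]]].

Lemma K_uuv A n (HK : K_cond A n) (u v : 'I_n -> A) : ~ Krel n u u v.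
Proof. kc HK; move=> H. apply: (Kas _ _ _ H). by apply: (Kcy); apply: (Kcy). Qed.

Lemma K_noE A n (HK : K_cond A n) (x y z : 'I_n -> A) : Krel n x y z ->
  [/\ ~ Erel n x y, ~ Erel n y z & ~ Erel n x z].
Proof.
move=> H; have Huu := K_uuv HK; kc HK; split=> He.
- by apply: (Huu x z); apply: (K2 _ _ _ _ (Esy _ _ He) H).
- by apply: (Huu y x); apply: (Kcy); apply: (K3 _ _ _ _ (Esy _ _ He) H).
- by apply: (Huu x y); apply: (Kcy); apply: (Kcy); apply: (K3 _ _ _ _ (Esy _ _ He) H).
Qed.

Lemma R_noE A n (HK : K_cond A n) (HL : lang_ok A) (Hn : 2 < n) (x y : 'I_n -> A) :
  Rrel n x y -> ~ Erel n x y.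
Proof.
move=> H He; have [_ HR _ _ _] := HL n Hn; have [ix iy] := HR _ _ H.
kc HK; apply: (Rir x); apply: (Rre _ _ _ _ (Erf _ ix) (Esy _ _ He) H).
Qed.

Lemma injK A n (HL : lang_ok A) (Hn : 2 < n) (x y z : 'I_n -> A) :
  Krel n x y z -> [/\ injective x, injective y & injective z].
Proof. by have [_ _ HK _ _] := HL n Hn; apply: HK. Qed.

Lemma injR A n (HL : lang_ok A) (Hn : 2 < n) (x y : 'I_n -> A) :
  Rrel n x y -> injective x /\ injective y.
Proof. by have [_ HR _ _ _] := HL n Hn; apply: HR. Qed.

Lemma K_L3 A n (HK : K_cond A n) (HL : lang_ok A) (Hn : 2 < n) (x y z w : 'I_n -> A) :
  Krel n x y z -> Krel n x z w -> Krel n y z w.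
Proof.
move=> H1 H2.
have Hyw : Krel n x y w by case: (HK) => _ [_ [_ [_ [_ [_ [_ [_ [_ [_ [_ [_ [Ktr _]]]]]]]]]]]]; apply: (Ktr) H1 H2.
have [_ iy iz] := injK HL Hn H1; have [_ _ iw] := injK HL Hn H2.
have [_ Eyz _] := K_noE HK H1; have [_ Ezw _] := K_noE HK H2; have [_ Eyw _] := K_noE HK Hyw.
kc HK.
case: (Kto _ _ _ iy iz iw Eyz Ezw Eyw) => // H3.
have H4 : Krel n z y x by apply: (Ktr z y w x); [apply: (Kcy) | apply: (Kcy)].
exfalso; apply: (Kas _ _ _ H1). by apply: (Kcy); apply: (Kcy); apply: (Kcy).
Qed.

Lemma Kcyc A n (HK : K_cond A n) (x y z : 'I_n -> A) : Krel n x y z -> Krel n y z x.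
Proof. by kc HK; apply: Kcy. Qed.
Lemma Kasy A n (HK : K_cond A n) (x y z : 'I_n -> A) : Krel n x y z -> ~ Krel n z y x.
Proof. by kc HK; apply: Kas. Qed.
Lemma Ktrans A n (HK : K_cond A n) (x y z w : 'I_n -> A) :
  Krel n x y z -> Krel n x z w -> Krel n x y w.
Proof. by kc HK; apply: Ktr. Qed.
Lemma Ktot A n (HK : K_cond A n) (x y z : 'I_n -> A) :
  injective x -> injective y -> injective z ->
  ~ Erel n x y -> ~ Erel n y z -> ~ Erel n x z -> Krel n x y z \/ Krel n z y x.
Proof. by kc HK; apply: Kto. Qed.
Lemma Kr2 A n (HK : K_cond A n) (x y y' z : 'I_n -> A) :
  Erel n y y' -> Krel n x y z -> Krel n x y' z.
Proof. by kc HK; apply: K2. Qed.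
Lemma Kr3 A n (HK : K_cond A n) (x y z z' : 'I_n -> A) :
  Erel n z z' -> Krel n x y z -> Krel n x y z'.
Proof. by kc HK; apply: K3. Qed.
Lemma Esymm A n (HK : K_cond A n) (x y : 'I_n -> A) : Erel n x y -> Erel n y x.
Proof. by kc HK; apply: Esy. Qed.
Lemma Etrans' A n (HK : K_cond A n) (x y z : 'I_n -> A) :
  Erel n x y -> Erel n y z -> Erel n x z.
Proof. by kc HK; apply: Etr. Qed.
Lemma Erefl' A n (HK : K_cond A n) (x : 'I_n -> A) : injective x -> Erel n x x.
Proof. by kc HK; apply: Erf. Qed.
Lemma Rresp A n (HK : K_cond A n) (x x' y y' : 'I_n -> A) :
  Erel n x x' -> Erel n y y' -> Rrel n x y -> Rrel n x' y'.
Proof. by kc HK; apply: Rre. Qed.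
Lemma Rinj A n (HK : K_cond A n) (x x' y : 'I_n -> A) :
  Rrel n x y -> Rrel n x' y -> Erel n x x'.
Proof. by kc HK; apply: Rin. Qed.
Lemma K4 A n (HK : K_cond A n) (v1 v2 v3 w1 w2 w3 : 'I_n -> A) :
  Rrel n v1 w1 -> Rrel n v2 w2 -> Rrel n v3 w3 -> Krel n v1 v2 v3 <-> Krel n w1 w2 w3.
Proof. by kc HK; apply: K4b. Qed.

Lemma K_min A n (HK : K_cond A n) (x : 'I_n -> A) (g : nat -> 'I_n -> A) m :
  0 < m -> exists2 q, q < m & forall j, j < m -> ~ Krel n x (g j) (g q).
Proof.
case: m => // m _; elim: m => [|m [q Hq IH]].
  exists 0 => // j; rewrite ltnS leqn0 => /eqP -> H.
  exact: (K_uuv HK (Kcyc HK H)).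
case: (classic (Krel n x (g m.+1) (g q))) => Hm.
- exists m.+1 => // j; rewrite ltnS leq_eqVlt => /orP [/eqP -> | Hj] H.
    exact: (K_uuv HK (Kcyc HK H)).
  by apply: (IH j Hj); apply: (Ktrans HK H Hm).
- exists q; first by apply: ltnW.
  move=> j; rewrite ltnS leq_eqVlt => /orP [/eqP -> // | Hj]; exact: IH.
Qed.

Lemma K_max A n (HK : K_cond A n) (x : 'I_n -> A) (g : nat -> 'I_n -> A) m :
  0 < m -> exists2 p, p < m & forall j, j < m -> ~ Krel n x (g p) (g j).
Proof.
case: m => // m _; elim: m => [|m [q Hq IH]].
  exists 0 => // j; rewrite ltnS leqn0 => /eqP -> H.
  exact: (K_uuv HK (Kcyc HK H)).
case: (classic (Krel n x (g q) (g m.+1))) => Hm.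
- exists m.+1 => // j; rewrite ltnS leq_eqVlt => /orP [/eqP -> | Hj] H.
    exact: (K_uuv HK (Kcyc HK H)).
  by apply: (IH j Hj); apply: (Ktrans HK Hm H).
- exists q; first by apply: ltnW.
  move=> j; rewrite ltnS leq_eqVlt => /orP [/eqP -> // | Hj]; exact: IH.
Qed.

Lemma arc A n (HK : K_cond A n) (HL : lang_ok A) (Hn : 2 < n) l (Hl : 0 < l)
  (g : nat -> 'I_n -> A) (HgR : forall j, Rrel n (g j) (g j.+1))
  (Hgm : forall j, g j = g (j %% l)) (x : 'I_n -> A) (ix : injective x)
  (HxE : forall j, ~ Erel n x (g j)) :
  exists p q, Krel n (g p) x (g q) /\ forall j, ~ Krel n (g p) (g j) (g q).
Proof.
have ig : forall j, injective (g j) by move=> j; case: (injR HL Hn (HgR j)).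
have [q _ Hq] := K_min HK x g Hl.
have [p _ Hp] := K_max HK x g Hl.
have {}Hq : forall j, ~ Krel n x (g j) (g q).
  by move=> j; rewrite (Hgm j); apply: Hq; rewrite ltn_mod.
have {}Hp : forall j, ~ Krel n x (g p) (g j).
  by move=> j; rewrite (Hgm j); apply: Hp; rewrite ltn_mod.
have Hq1 : Krel n x (g q) (g q.+1).
  case: (Ktot HK ix (ig q) (ig q.+1) (HxE q) (R_noE HK HL Hn (HgR q)) (HxE q.+1)) => // H.
  exfalso; apply: (Hq q.+1); do 2 apply: (Kcyc HK); exact: H.
have Hpq : ~ Erel n (g p) (g q).
  move=> He; apply: (Hp q.+1); apply: (Kr2 HK (Esymm HK He) Hq1).
have Hxqp : Krel n x (g q) (g p).
  case: (Ktot HK ix (ig q) (ig p) (HxE q) (fun h => Hpq (Esymm HK h)) (HxE p)) => // H.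
  exfalso; apply: (Hp q); do 2 apply: (Kcyc HK); exact: H.
exists p, q; split; first by do 2 apply: (Kcyc HK).
move=> j Hj; have [Epj Ejq Epq] := K_noE HK Hj.
have H1 : Krel n x (g q) (g j).
  case: (Ktot HK ix (ig j) (ig q) (HxE j) Ejq (HxE q)) => H; first by case: (Hq j H).
  by do 2 apply: (Kcyc HK); exact: H.
have H2 : Krel n x (g j) (g p).
  case: (Ktot HK ix (ig p) (ig j) (HxE p) Epj (HxE j)) => H; first by case: (Hp j H).
  by do 2 apply: (Kcyc HK); exact: H.
have H3 := K_L3 HK HL Hn H1 H2.
exact: (Kasy HK Hj H3).
Qed.

Lemma arc_unique A n (HK : K_cond A n) (HL : lang_ok A) (Hn : 2 < n)
  (p q p' q' y : 'I_n -> A) :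
  Krel n p y q -> Krel n p' y q' -> ~ Krel n p p' q -> ~ Krel n p' p q' ->
  ~ Erel n p p' -> False.
Proof.
move=> H1 H2 N1 N2 Epp'.
have [ip _ iq] := injK HL Hn H1; have [ip' _ _] := injK HL Hn H2.
have [_ _ Epq] := K_noE HK H1.
have H3 : Krel n p' p y.
  case: (classic (Erel n p' q)) => Ep'q.
    by apply: (Kcyc HK); apply: (Kcyc HK); apply: (Kr3 HK (Esymm HK Ep'q) H1).
  case: (Ktot HK ip ip' iq Epp' Ep'q Epq) => // H.
  have H4 : Krel n p q p' by do 2 apply: (Kcyc HK).
  have H5 := Ktrans HK H1 H4.
  by apply: (Kcyc HK); apply: (Kcyc HK).
by apply: N2; apply: (Ktrans HK H3 H2).
Qed.

Lemma gshift l (Hl : 0 < l) T (g : nat -> T) (Hgm : forall j, g j = g (j %% l)) j :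
  g j = g (j + l.-1).+1.
Proof. by rewrite (Hgm j) (Hgm (j + l.-1).+1) -addnS prednK // modnDr. Qed.

Lemma finish A n (HK : K_cond A n) (HL : lang_ok A) (Hn : 2 < n) l (Hl : 0 < l)
  (g : nat -> 'I_n -> A) (HgR : forall j, Rrel n (g j) (g j.+1))
  (Hgm : forall j, g j = g (j %% l)) p q
  (Hmin : forall j, ~ Krel n (g p) (g j) (g q)) (x y x1 : 'I_n -> A)
  (HxE : forall j, ~ Erel n x (g j)) (Hx1 : Rrel n x x1)
  (Hpxy : Krel n (g p) x y) (Hpyq : Krel n (g p) y (g q)) : Krel n x y x1.
Proof.
have ig : forall j, injective (g j) by move=> j; case: (injR HL Hn (HgR j)).
have Hpxq := Ktrans HK Hpxy Hpyq.
have H1 : Krel n (g p.+1) x1 (g q.+1) by apply/(K4 HK (HgR p) Hx1 (HgR q)).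
have Hmin' : forall j, ~ Krel n (g p.+1) (g j) (g q.+1).
  move=> j; rewrite (gshift Hl Hgm j) => H.
  by apply: (Hmin (j + l.-1)); apply/(K4 HK (HgR p) (HgR _) (HgR q)).
have Hx1E : forall j, ~ Erel n x1 (g j).
  move=> j; rewrite (gshift Hl Hgm j) => He.
  have [_ ix1] := injR HL Hn Hx1.
  have HR : Rrel n (g (j + l.-1)) x1.
    by apply: (Rresp HK (Erefl' HK (ig _)) (Esymm HK He) (HgR _)).
  by apply: (HxE (j + l.-1)); apply: (Rinj HK Hx1 HR).
have [_ ix1] := injR HL Hn Hx1.
have [_ _ Epq] := K_noE HK Hpxq.
case: (Ktot HK (ig p) ix1 (ig q) (fun h => Hx1E p (Esymm HK h)) (Hx1E q) Epq) => H.
  exfalso; apply: (arc_unique HK HL Hn H H1 (Hmin p.+1) _ (R_noE HK HL Hn (HgR p))).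
  by rewrite (gshift Hl Hgm p); apply: Hmin'.
have H2 : Krel n (g p) (g q) x1 by do 2 apply: (Kcyc HK).
have H3 := Ktrans HK Hpyq H2.
exact: (K_L3 HK HL Hn Hpxy H3).
Qed.

Lemma abs_main A n (HK : K_cond A n) (HL : lang_ok A) (Hn : 2 < n) l (Hl : 0 < l)
  (g : nat -> 'I_n -> A) (HgR : forall j, Rrel n (g j) (g j.+1))
  (Hgm : forall j, g j = g (j %% l)) (a0 a1 b0 b1 : 'I_n -> A)
  (Ha : Rrel n a0 a1) (Hb : Rrel n b0 b1)
  (HtE : forall j, Erel n a0 (g j) <-> Erel n b0 (g j))
  (HtK : forall p q, Krel n (g p) a0 (g q) <-> Krel n (g p) b0 (g q)) :
  (Krel n a0 b0 a1 \/ (Erel n a0 b0 /\ ~ Erel n b0 a1)) \/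
  (Krel n b0 a0 b1 \/ (Erel n b0 a0 /\ ~ Erel n a0 b1)).
Proof.
have [ia0 _] := injR HL Hn Ha; have [ib0 _] := injR HL Hn Hb.
have HEab : Erel n a0 b0 -> (Krel n a0 b0 a1 \/ (Erel n a0 b0 /\ ~ Erel n b0 a1)).
  move=> He; right; split => // He2.
  by apply: (R_noE HK HL Hn Ha); apply: (Etrans' HK He He2).
case: (classic (exists j, Erel n a0 (g j))) => [[j Hj] | HnE].
  left; apply: HEab; apply: (Etrans' HK Hj); apply: (Esymm HK); exact/HtE.
have HaE : forall j, ~ Erel n a0 (g j) by move=> j Hj; apply: HnE; exists j.
have HbE : forall j, ~ Erel n b0 (g j) by move=> j /HtE; apply: HaE.
have [p [q [Hpaq Hmin]]] := arc HK HL Hn Hl HgR Hgm ia0 HaE.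
have Hpbq : Krel n (g p) b0 (g q) by apply/HtK.
have ig : injective (g p) by case: (injR HL Hn (HgR p)).
case: (classic (Erel n a0 b0)) => Hab; first by left; apply: HEab.
case: (Ktot HK ig ia0 ib0 (fun h => HaE p (Esymm HK h)) Hab (fun h => HbE p (Esymm HK h))) => H.
  by left; left; apply: (finish HK HL Hn Hl HgR Hgm Hmin HaE Ha H Hpbq).
right; left; apply: (finish HK HL Hn Hl HgR Hgm Hmin HbE Hb _ Hpaq).
by do 2 apply: (Kcyc HK).
Qed.

Lemma sat_exs_r (M : Lstr) (D : M -> Prop) phi (vs : seq nat) (rho rho' : nat -> M) :
  sat D rho' phi -> (forall v, v \in vs -> D (rho' v)) ->
  (forall v, v \notin vs -> rho' v = rho v) -> sat D rho (foldr FEx phi vs).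
Proof.
elim: vs rho => [|v vs IH] rho /= Hs HD Hout.
  by have -> : rho = rho' by apply: functional_extensionality => w; rewrite Hout.
exists (rho' v); split; first by apply: HD; rewrite inE eqxx.
apply: IH => // w; first by move=> Hw; apply: HD; rewrite inE Hw orbT.
move=> Hw; rewrite /upd; case: eqP => [-> //|/eqP Hne].
by apply: Hout; rewrite inE negb_or Hne.
Qed.

Lemma sat_exs_l (M : Lstr) (D : M -> Prop) phi (vs : seq nat) (rho : nat -> M) :
  sat D rho (foldr FEx phi vs) -> exists rho', [/\ sat D rho' phi,
    (forall v, v \in vs -> D (rho' v)) & (forall v, v \notin vs -> rho' v = rho v)].
Proof.
elim: vs rho => [|v vs IH] rho /=; first by move=> H; exists rho.
case=> x [Dx /IH [r [Hs HD Hout]]]; exists r; split => // w.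
  rewrite inE => /orP [/eqP -> | Hw]; last exact: HD.
  case: (boolP (v \in vs)) => Hv; first exact: HD.
  by rewrite Hout // /upd eqxx.
rewrite inE negb_or => /andP [Hwv Hw]; rewrite Hout // /upd.
by rewrite (negbTE Hwv).
Qed.

Definition tupv n (j : nat) : 'I_n.+3 -> nat := fun i => j * n.+3 + i.
Arguments tupv : clear implicits.

Definition body n : form :=
  foldr (fun j acc => FAnd (@FR n (tupv n j) (tupv n (j.+1 %% n.+3))) acc) (FEq 0 0) (iota 0 n.+3).

Definition cycf n : form := foldr FEx (body n) (iota 0 (n.+3 * n.+3)).


Lemma sat_body_gen (M : Lstr) (D : M -> Prop) n rho (js : seq nat) :
  sat D rho (foldr (fun j acc => FAnd (@FR n (tupv n j) (tupv n (j.+1 %% n.+3))) acc) (FEq 0 0) js)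
  <-> forall j, j \in js -> Rrel n.+3 (rho \o tupv n j) (rho \o tupv n (j.+1 %% n.+3)).
Proof.
elim: js => [|j js IH] /=; first by split.
split.
  case=> H1 /IH H2 i; rewrite inE => /orP [/eqP -> // | Hi]; exact: H2.
move=> H; split; first by apply: H; rewrite inE eqxx.
by apply/IH => i Hi; apply: H; rewrite inE Hi orbT.
Qed.


Lemma sat_body (M : Lstr) (D : M -> Prop) n rho :
  sat D rho (body n) <-> forall j, j < n.+3 ->
     Rrel n.+3 (rho \o tupv n j) (rho \o tupv n (j.+1 %% n.+3)).
Proof.
rewrite /body sat_body_gen; split => H j Hj; apply: H; by rewrite mem_iota in Hj *.
Qed.

Lemma ext_lo (T : Type) k (a : 'I_k -> T) rho (i : 'I_k) : ext a rho i = a i.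
Proof. by rewrite /ext (insubT (fun x => x < k) (ltn_ord i)) /=; congr a; apply: val_inj. Qed.

Lemma ext_hi (T : Type) k (a : 'I_k -> T) rho v : ext a rho (k + v) = rho v.
Proof. by rewrite /ext insubN /= ?addKn // -ltnNge leq_addr. Qed.

Definition lift (M : Lstr) (P : M -> Prop) m (t : 'I_m -> M) (H : forall i, P (t i)) :
  'I_m -> sub P := fun i => exist P (t i) (H i).

Lemma lift_eq (M : Lstr) (P : M -> Prop) m (t1 t2 : 'I_m -> M) H1 H2 :
  t1 = t2 -> @lift M P m t1 H1 = @lift M P m t2 H2.
Proof. by move=> E; subst; rewrite (proof_irrelevance _ H1 H2). Qed.

Lemma Ach_mono (M : Type) (Ach : nat -> M -> Prop) (Hm : forall k x, Ach k x -> Ach k.+1 x) k k' x :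
  k <= k' -> Ach k x -> Ach k' x.
Proof.
elim: k' => [|k' IH]; first by rewrite leqn0 => /eqP ->.
rewrite leq_eqVlt => /orP [/eqP -> //| Hk] H; apply: Hm; exact: IH.
Qed.

Lemma cover_tuple (M : Type) (Ach : nat -> M -> Prop) (Hm : forall k x, Ach k x -> Ach k.+1 x)
  (Hc : forall x, exists k, Ach k x) m (t : 'I_m -> M) : exists k, forall i, Ach k (t i).
Proof.
suff: forall r, exists k, forall i : 'I_m, i < r -> Ach k (t i).
  by case/(_ m) => k H; exists k => i; apply: H.
elim=> [|r [k IH]]; first by exists 0.
case: (ltnP r m) => Hr.
  have [k' Hk'] := Hc (t (Ordinal Hr)).
  exists (maxn k k') => i; rewrite ltnS leq_eqVlt => /orP [/eqP Hi | Hi].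
    have -> : i = Ordinal Hr by apply: val_inj.
    by apply: (Ach_mono Hm _ Hk'); rewrite leq_maxr.
  by apply: (Ach_mono Hm _ (IH i Hi)); rewrite leq_maxl.
by exists k => i Hi; apply: IH; apply: leq_trans (ltn_ord i) Hr.
Qed.

Lemma cover_tuples (M : Type) (Ach : nat -> M -> Prop) (Hm : forall k x, Ach k x -> Ach k.+1 x)
  (Hc : forall x, exists k, Ach k x) m (T : nat -> 'I_m -> M) r :
  exists k, forall j, j < r -> forall i, Ach k (T j i).
Proof.
elim: r => [|r [k IH]]; first by exists 0.
have [k' Hk'] := cover_tuple Hm Hc (T r).
exists (maxn k k') => j; rewrite ltnS leq_eqVlt => /orP [/eqP -> | Hj] i.
  by apply: (Ach_mono Hm _ (Hk' i)); rewrite leq_maxr.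
by apply: (Ach_mono Hm _ (IH j Hj i)); rewrite leq_maxl.
Qed.
From mathcomp Require Import zify.
Unset Implicit Arguments.
Set Strict Implicit.

Theorem lemma2p3 (M : Lstr) (HM : generic M)
  (k : nat) (a b : 'I_k -> M)
  (Ha : injective a) (Hb : injective b)
  (HaC : in_C (sub (range_of a))) (HbC : in_C (sub (range_of b)))
  (Hab0 : same_type0 a b)
  (N : M -> Prop) (HN : elem_sub N) (HabN : same_type_over N a b)
  (l : nat) (Hl : 2 < l) (s : 'I_l -> 'I_k)
  (Hs : forall i j : 'I_l, i < j -> s i < s j)
  (fa fb : 'I_l -> M)
  (Hfa : Rrel l (a \o s) fa) (Hfb : Rrel l (b \o s) fb) :
  le_lt (a \o s) (b \o s) fa \/ le_lt (b \o s) (a \o s) fb.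
Proof.
case: l Hl s Hs fa fb Hfa Hfb => [|[|[|n]]] // _ s _ fa fb Hfa Hfb.
have HL3 : 2 < n.+3 by [].
have HL0 : 0 < n.+3 by [].
case: HM => _ [[Ach [HAC HAm HAc]] _].
have [n0 Hn0] := HN.1.
have [k0 Hk0] := cover_tuples HAm HAc (fun j => if j == 0 then a \o s else fa) 2.
have Has0 : forall i, Ach k0 ((a \o s) i) := fun i => Hk0 0 isT i.
have Hfa0 : forall i, Ach k0 (fa i) := fun i => Hk0 1 isT i.
have [[_ [HLS0 HKS0]] Hst0] := HAC k0.
have HR0 : Rrel n.+3 (lift Has0) (lift Hfa0) := Hfa.
have [HallE | Hcyc] := Hst0 n.+3 HL3.
  have [i1 i2] := injR HLS0 HL3 HR0.
  by case: (R_noE (HKS0 _ HL3) HLS0 HL3 HR0 (HallE _ _ i1 i2)).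
have [c [_ _ Hc1 Hc2]] := Hcyc _ (injR HLS0 HL3 HR0).1.
pose rho' (v : nat) : M := if v < n.+3 * n.+3
  then proj1_sig (c (v %/ n.+3) (inord (v %% n.+3))) else n0.
have Erho : forall j, j < n.+3 -> rho' \o tupv n j = fun i => proj1_sig (c j i).
  move=> j Hj; apply: functional_extensionality => i /=.
  rewrite /rho' /tupv.
  have -> : j * n.+3 + i < n.+3 * n.+3 by have := ltn_ord i; nia.
  rewrite divnMDl // divn_small // addn0 modnMDl modn_small //.
  by rewrite inord_val.
have HsatM : msat (fun _ => n0) (cycf n).
  apply: (sat_exs_r (rho' := rho')).
  - apply/sat_body => j Hj; rewrite !Erho //; last by rewrite ltn_mod.
    case: (ltnP j.+1 n.+3) => Hj1.
      by rewrite modn_small //; apply: Hc1.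
    have -> : j = n.+2 by apply/eqP; rewrite eqn_leq -ltnS Hj.
    by rewrite modnn; apply: Hc2.
  - by [].
  - by move=> v; rewrite mem_iota /= /rho' => /negbTE ->.
have := (HN.2 (cycf n) (fun _ => n0) (fun _ => Hn0)).2 HsatM.
case/sat_exs_l => r [/sat_body Hr HrN Hrout].
have HrN' : forall v, N (r v).
  by move=> v; case: (boolP (v \in iota 0 (n.+3 * n.+3))) => Hv; [apply: HrN | rewrite Hrout].
pose g (j : nat) : 'I_n.+3 -> M := r \o tupv n (j %% n.+3).
have Hgm : forall j, g j = g (j %% n.+3) by move=> j; rewrite /g modn_mod.
have HgR : forall j, Rrel n.+3 (g j) (g j.+1).
  move=> j; have := Hr (j %% n.+3) (ltn_mod _ _).
  have -> : (j %% n.+3).+1 %% n.+3 = j.+1 %% n.+3 by have := modnDml j 1 n.+3; rewrite !addn1.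
  by move=> H; rewrite /g; exact: H.
pose sv : 'I_n.+3 -> nat := fun i => nat_of_ord (s i).
pose gv (j : nat) : 'I_n.+3 -> nat := fun i => k + tupv n (j %% n.+3) i.
have Ea : ext a r \o sv = a \o s by apply: functional_extensionality => i; apply: ext_lo.
have Eb : ext b r \o sv = b \o s by apply: functional_extensionality => i; apply: ext_lo.
have Ega : forall j, ext a r \o gv j = g j.
  by move=> j; apply: functional_extensionality => i; apply: ext_hi.
have Egb : forall j, ext b r \o gv j = g j.
  by move=> j; apply: functional_extensionality => i; apply: ext_hi.
have HtE : forall j, Erel n.+3 (a \o s) (g j) <-> Erel n.+3 (b \o s) (g j).
  move=> j; have := HabN (@FE n sv (gv j)) r HrN'.
  by rewrite /msat /= Ea Eb Ega Egb.
have HtK : forall p q, Krel n.+3 (g p) (a \o s) (g q) <-> Krel n.+3 (g p) (b \o s) (g q).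
  move=> p q; have := HabN (@FK n (gv p) sv (gv q)) r HrN'.
  by rewrite /msat /= Ea Eb !Ega !Egb.
pose T (j : nat) : 'I_n.+3 -> M :=
  match j with 0 => a \o s | 1 => b \o s | 2 => fa | 3 => fb | j'.+4 => g j' end.
have [k1 Hk1] := cover_tuples HAm HAc T (n.+3 + 4).
have Ha1 : forall i, Ach k1 ((a \o s) i).
  by move=> i; apply: (Hk1 0); rewrite addn4.
have Hb1 : forall i, Ach k1 ((b \o s) i).
  by move=> i; apply: (Hk1 1); rewrite addn4.
have Hfa1 : forall i, Ach k1 (fa i).
  by move=> i; apply: (Hk1 2); rewrite addn4.
have Hfb1 : forall i, Ach k1 (fb i).
  by move=> i; apply: (Hk1 3); rewrite addn4.
have Hg1 : forall j i, Ach k1 (g j i).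
  move=> j i; rewrite Hgm; apply: (Hk1 (j %% n.+3).+4).
  by rewrite addn4 4!ltnS ltn_mod.
have [[_ [HLS1 HKS1]] _] := HAC k1.
pose G (j : nat) := lift (Hg1 j).
have HGm : forall j, G j = G (j %% n.+3) by move=> j; apply: lift_eq; apply: Hgm.
have HGR : forall j, Rrel n.+3 (G j) (G j.+1) := HgR.
have HA : Rrel n.+3 (lift Ha1) (lift Hfa1) := Hfa.
have HB : Rrel n.+3 (lift Hb1) (lift Hfb1) := Hfb.
exact: (abs_main (HKS1 _ HL3) HLS1 HL3 HL0 HGR HGm HA HB HtE HtK).
Qed.
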